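(* For every $n\equiv 7 \pmod{16}$ with $n\geq 23$, there exists an almost 2-perfect maximum 8-cycle packing of $K_n$.
   Context: An 8-cycle packing of $K_n$ on vertex set $\mathcal{X}$ is a triple $(\mathcal{X},\mathcal{C},\mathcal{L})$ with $\mathcal{C}$ a collection of pairwise edge-disjoint 8-cycles of $K_n$ and leave $\mathcal{L}$ the set of edges in no cycle of $\mathcal{C}$; it is maximum if $|\mathcal{L}|$ is minimum among all 8-cycle packings of $K_n$. For an 8-cycle $C$, an inside 8-cycle of $C$ is an 8-cycle on the same vertex set sharing no edge with $C$. The packing is almost 2-perfect if one can choose for each $C\in\mathcal{C}$ an inside 8-cycle $C'$ such that $(\mathcal{X},\{C'\},\mathcal{L})$ is again an 8-cycle packing with the same leave. *)

(* Defs.v *)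
From HB Require Import structures.
From mathcomp Require Import all_boot.
Set Implicit Arguments. Unset Strict Implicit. Unset Printing Implicit Defensive.

Definition Kedges (n : nat) : {set {set 'I_n}} := [set e : {set 'I_n} | #|e| == 2].

Definition cyc (n : nat) := 8.-tuple 'I_n.

Definition is_cycle8 n (c : cyc n) : bool := uniq c.

Definition cedges n (c : cyc n) : {set {set 'I_n}} :=
  [set [set tnth c i; tnth c (ordS i)] | i : 'I_8].

Definition cverts n (c : cyc n) : {set 'I_n} := [set x in c].

Definition covered n (C : seq (cyc n)) : {set {set 'I_n}} :=
  \bigcup_(c <- C) cedges c.

Definition is_packing n (C : seq (cyc n)) : Prop :=
  all (@is_cycle8 n) C /\
  pairwise (fun c d => [disjoint cedges c & cedges d]) C.

Definition leave n (C : seq (cyc n)) : {set {set 'I_n}} :=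
  Kedges n :\: covered C.

Definition is_max_packing n (C : seq (cyc n)) : Prop :=
  is_packing C /\
  forall D : seq (cyc n), is_packing D -> #|leave C| <= #|leave D|.

Definition inside n (c c' : cyc n) : Prop :=
  is_cycle8 c' /\ cverts c' = cverts c /\ [disjoint cedges c & cedges c'].

Definition almost_2perfect n (C : seq (cyc n)) : Prop :=
  exists D : seq (cyc n * cyc n),
    map fst D = C /\
    (forall p, p \in D -> inside p.1 p.2) /\
    is_packing (map snd D) /\
    leave (map snd D) = leave C.

(* Main.v *)
Require Import Defs.
From HB Require Import structures.
From mathcomp Require Import all_boot.
From mathcomp Require Import zify.
Set Implicit Arguments. Unset Strict Implicit. Unset Printing Implicit Defensive.

Definition T1 : seq (seq nat * seq nat) :=
  [:: ([:: 6; 9; 7; 11; 10; 16; 8; 13], [:: 6; 11; 8; 10; 9; 13; 7; 16]);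
     ([:: 7; 10; 8; 12; 11; 17; 9; 14], [:: 7; 12; 9; 11; 10; 14; 8; 17]);
     ([:: 8; 11; 9; 13; 12; 18; 10; 15], [:: 8; 13; 10; 12; 11; 15; 9; 18]);
     ([:: 9; 12; 10; 14; 13; 19; 11; 16], [:: 9; 14; 11; 13; 12; 16; 10; 19]);
     ([:: 10; 13; 11; 15; 14; 20; 12; 17], [:: 10; 15; 12; 14; 13; 17; 11; 20]);
     ([:: 11; 14; 12; 16; 15; 21; 13; 18], [:: 11; 16; 13; 15; 14; 18; 12; 21]);
     ([:: 12; 15; 13; 17; 16; 22; 14; 19], [:: 12; 17; 14; 16; 15; 19; 13; 22]);
     ([:: 13; 16; 14; 18; 17; 6; 15; 20], [:: 13; 18; 15; 17; 16; 20; 14; 6]);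
     ([:: 14; 17; 15; 19; 18; 7; 16; 21], [:: 14; 19; 16; 18; 17; 21; 15; 7]);
     ([:: 15; 18; 16; 20; 19; 8; 17; 22], [:: 15; 20; 17; 19; 18; 22; 16; 8]);
     ([:: 16; 19; 17; 21; 20; 9; 18; 6], [:: 16; 21; 18; 20; 19; 6; 17; 9]);
     ([:: 17; 20; 18; 22; 21; 10; 19; 7], [:: 17; 22; 19; 21; 20; 7; 18; 10]);
     ([:: 18; 21; 19; 6; 22; 11; 20; 8], [:: 18; 6; 20; 22; 21; 8; 19; 11]);
     ([:: 19; 22; 20; 7; 6; 12; 21; 9], [:: 19; 7; 21; 6; 22; 9; 20; 12]);
     ([:: 20; 6; 21; 8; 7; 13; 22; 10], [:: 20; 8; 22; 7; 6; 10; 21; 13]);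
     ([:: 21; 7; 22; 9; 8; 14; 6; 11], [:: 21; 9; 6; 8; 7; 11; 22; 14]);
     ([:: 22; 8; 6; 10; 9; 15; 7; 12], [:: 22; 10; 7; 9; 8; 12; 6; 15]);
     ([:: 11; 0; 12; 1; 13; 2; 14; 3], [:: 11; 1; 14; 0; 13; 3; 12; 2]);
     ([:: 11; 4; 12; 5; 13; 0; 14; 1], [:: 11; 0; 12; 1; 13; 4; 14; 5]);
     ([:: 11; 2; 12; 3; 13; 4; 14; 5], [:: 11; 3; 14; 2; 13; 5; 12; 4]);
     ([:: 15; 0; 16; 1; 17; 2; 18; 3], [:: 15; 1; 18; 0; 17; 3; 16; 2]);
     ([:: 15; 4; 16; 5; 17; 0; 18; 1], [:: 15; 0; 16; 1; 17; 4; 18; 5]);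
     ([:: 15; 2; 16; 3; 17; 4; 18; 5], [:: 15; 3; 18; 2; 17; 5; 16; 4]);
     ([:: 19; 0; 20; 1; 21; 2; 22; 3], [:: 19; 1; 22; 0; 21; 3; 20; 2]);
     ([:: 19; 4; 20; 5; 21; 0; 22; 1], [:: 19; 0; 20; 1; 21; 4; 22; 5]);
     ([:: 19; 2; 20; 3; 21; 4; 22; 5], [:: 19; 3; 22; 2; 21; 5; 20; 4]);
     ([:: 0; 2; 10; 5; 7; 1; 4; 9], [:: 0; 5; 1; 9; 2; 7; 4; 10]);
     ([:: 0; 3; 7; 4; 5; 9; 1; 8], [:: 0; 7; 1; 4; 8; 5; 3; 9]);
     ([:: 0; 5; 8; 2; 6; 3; 1; 10], [:: 0; 2; 5; 10; 3; 8; 1; 6]);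
     ([:: 0; 6; 5; 3; 8; 4; 2; 7], [:: 0; 3; 7; 5; 4; 6; 2; 8]);
     ([:: 1; 5; 2; 9; 3; 10; 4; 6], [:: 1; 3; 6; 5; 9; 4; 2; 10])].
Definition T2 : seq (seq nat * seq nat) :=
  [:: ([:: 6; 9; 7; 11; 10; 16; 8; 13], [:: 6; 11; 8; 10; 9; 13; 7; 16]);
     ([:: 7; 10; 8; 12; 11; 17; 9; 14], [:: 7; 12; 9; 11; 10; 14; 8; 17]);
     ([:: 8; 11; 9; 13; 12; 18; 10; 15], [:: 8; 13; 10; 12; 11; 15; 9; 18]);
     ([:: 9; 12; 10; 14; 13; 19; 11; 16], [:: 9; 14; 11; 13; 12; 16; 10; 19]);
     ([:: 10; 13; 11; 15; 14; 20; 12; 17], [:: 10; 15; 12; 14; 13; 17; 11; 20]);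
     ([:: 11; 14; 12; 16; 15; 21; 13; 18], [:: 11; 16; 13; 15; 14; 18; 12; 21]);
     ([:: 12; 15; 13; 17; 16; 22; 14; 19], [:: 12; 17; 14; 16; 15; 19; 13; 22]);
     ([:: 13; 16; 14; 18; 17; 6; 15; 20], [:: 13; 18; 15; 17; 16; 20; 14; 6]);
     ([:: 14; 17; 15; 19; 18; 7; 16; 21], [:: 14; 19; 16; 18; 17; 21; 15; 7]);
     ([:: 15; 18; 16; 20; 19; 8; 17; 22], [:: 15; 20; 17; 19; 18; 22; 16; 8]);
     ([:: 16; 19; 17; 21; 20; 9; 18; 6], [:: 16; 21; 18; 20; 19; 6; 17; 9]);
     ([:: 17; 20; 18; 22; 21; 10; 19; 7], [:: 17; 22; 19; 21; 20; 7; 18; 10]);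
     ([:: 18; 21; 19; 6; 22; 11; 20; 8], [:: 18; 6; 20; 22; 21; 8; 19; 11]);
     ([:: 19; 22; 20; 7; 6; 12; 21; 9], [:: 19; 7; 21; 6; 22; 9; 20; 12]);
     ([:: 20; 6; 21; 8; 7; 13; 22; 10], [:: 20; 8; 22; 7; 6; 10; 21; 13]);
     ([:: 21; 7; 22; 9; 8; 14; 6; 11], [:: 21; 9; 6; 8; 7; 11; 22; 14]);
     ([:: 22; 8; 6; 10; 9; 15; 7; 12], [:: 22; 10; 7; 9; 8; 12; 6; 15]);
     ([:: 7; 0; 8; 1; 9; 2; 10; 3], [:: 7; 1; 10; 0; 9; 3; 8; 2]);
     ([:: 7; 4; 8; 5; 9; 0; 10; 1], [:: 7; 0; 8; 1; 9; 4; 10; 5]);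
     ([:: 7; 2; 8; 3; 9; 4; 10; 5], [:: 7; 3; 10; 2; 9; 5; 8; 4]);
     ([:: 11; 0; 12; 1; 13; 2; 14; 3], [:: 11; 1; 14; 0; 13; 3; 12; 2]);
     ([:: 11; 4; 12; 5; 13; 0; 14; 1], [:: 11; 0; 12; 1; 13; 4; 14; 5]);
     ([:: 11; 2; 12; 3; 13; 4; 14; 5], [:: 11; 3; 14; 2; 13; 5; 12; 4]);
     ([:: 15; 0; 16; 1; 17; 2; 18; 3], [:: 15; 1; 18; 0; 17; 3; 16; 2]);
     ([:: 15; 4; 16; 5; 17; 0; 18; 1], [:: 15; 0; 16; 1; 17; 4; 18; 5]);
     ([:: 15; 2; 16; 3; 17; 4; 18; 5], [:: 15; 3; 18; 2; 17; 5; 16; 4]);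
     ([:: 19; 0; 20; 1; 21; 2; 22; 3], [:: 19; 1; 22; 0; 21; 3; 20; 2]);
     ([:: 19; 4; 20; 5; 21; 0; 22; 1], [:: 19; 0; 20; 1; 21; 4; 22; 5]);
     ([:: 19; 2; 20; 3; 21; 4; 22; 5], [:: 19; 3; 22; 2; 21; 5; 20; 4])].
Definition T3 : seq (seq nat * seq nat) :=
  [:: ([:: 0; 16; 1; 17; 2; 18; 3; 19], [:: 0; 17; 3; 16; 2; 19; 1; 18]);
     ([:: 0; 17; 3; 16; 2; 19; 1; 18], [:: 0; 16; 1; 17; 2; 18; 3; 19]);
     ([:: 0; 20; 1; 21; 2; 22; 3; 23], [:: 0; 21; 3; 20; 2; 23; 1; 22]);
     ([:: 0; 21; 3; 20; 2; 23; 1; 22], [:: 0; 20; 1; 21; 2; 22; 3; 23]);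
     ([:: 0; 24; 1; 25; 2; 26; 3; 27], [:: 0; 25; 3; 24; 2; 27; 1; 26]);
     ([:: 0; 25; 3; 24; 2; 27; 1; 26], [:: 0; 24; 1; 25; 2; 26; 3; 27]);
     ([:: 0; 28; 1; 29; 2; 30; 3; 31], [:: 0; 29; 3; 28; 2; 31; 1; 30]);
     ([:: 0; 29; 3; 28; 2; 31; 1; 30], [:: 0; 28; 1; 29; 2; 30; 3; 31]);
     ([:: 4; 16; 5; 17; 6; 18; 7; 19], [:: 4; 17; 7; 16; 6; 19; 5; 18]);
     ([:: 4; 17; 7; 16; 6; 19; 5; 18], [:: 4; 16; 5; 17; 6; 18; 7; 19]);
     ([:: 4; 20; 5; 21; 6; 22; 7; 23], [:: 4; 21; 7; 20; 6; 23; 5; 22]);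
     ([:: 4; 21; 7; 20; 6; 23; 5; 22], [:: 4; 20; 5; 21; 6; 22; 7; 23]);
     ([:: 4; 24; 5; 25; 6; 26; 7; 27], [:: 4; 25; 7; 24; 6; 27; 5; 26]);
     ([:: 4; 25; 7; 24; 6; 27; 5; 26], [:: 4; 24; 5; 25; 6; 26; 7; 27]);
     ([:: 4; 28; 5; 29; 6; 30; 7; 31], [:: 4; 29; 7; 28; 6; 31; 5; 30]);
     ([:: 4; 29; 7; 28; 6; 31; 5; 30], [:: 4; 28; 5; 29; 6; 30; 7; 31]);
     ([:: 8; 16; 9; 17; 10; 18; 11; 19], [:: 8; 17; 11; 16; 10; 19; 9; 18]);
     ([:: 8; 17; 11; 16; 10; 19; 9; 18], [:: 8; 16; 9; 17; 10; 18; 11; 19]);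
     ([:: 8; 20; 9; 21; 10; 22; 11; 23], [:: 8; 21; 11; 20; 10; 23; 9; 22]);
     ([:: 8; 21; 11; 20; 10; 23; 9; 22], [:: 8; 20; 9; 21; 10; 22; 11; 23]);
     ([:: 8; 24; 9; 25; 10; 26; 11; 27], [:: 8; 25; 11; 24; 10; 27; 9; 26]);
     ([:: 8; 25; 11; 24; 10; 27; 9; 26], [:: 8; 24; 9; 25; 10; 26; 11; 27]);
     ([:: 8; 28; 9; 29; 10; 30; 11; 31], [:: 8; 29; 11; 28; 10; 31; 9; 30]);
     ([:: 8; 29; 11; 28; 10; 31; 9; 30], [:: 8; 28; 9; 29; 10; 30; 11; 31]);
     ([:: 12; 16; 13; 17; 14; 18; 15; 19], [:: 12; 17; 15; 16; 14; 19; 13; 18]);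
     ([:: 12; 17; 15; 16; 14; 19; 13; 18], [:: 12; 16; 13; 17; 14; 18; 15; 19]);
     ([:: 12; 20; 13; 21; 14; 22; 15; 23], [:: 12; 21; 15; 20; 14; 23; 13; 22]);
     ([:: 12; 21; 15; 20; 14; 23; 13; 22], [:: 12; 20; 13; 21; 14; 22; 15; 23]);
     ([:: 12; 24; 13; 25; 14; 26; 15; 27], [:: 12; 25; 15; 24; 14; 27; 13; 26]);
     ([:: 12; 25; 15; 24; 14; 27; 13; 26], [:: 12; 24; 13; 25; 14; 26; 15; 27]);
     ([:: 12; 28; 13; 29; 14; 30; 15; 31], [:: 12; 29; 15; 28; 14; 31; 13; 30]);
     ([:: 12; 29; 15; 28; 14; 31; 13; 30], [:: 12; 28; 13; 29; 14; 30; 15; 31])].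
Definition I8 := iota 0 8.
Arguments I8 : simpl never.

Definition nedge (s : seq nat) (x y : nat) : bool :=
  has (fun i => ((nth 0 s i == x) && (nth 0 s (i.+1 %% 8) == y))
             || ((nth 0 s i == y) && (nth 0 s (i.+1 %% 8) == x))) I8.

Definition goodpair (N : nat) (p : seq nat * seq nat) : bool :=
  [&& size p.1 == 8, size p.2 == 8, uniq p.1, all (fun x => x < N) p.1,
      perm_eq p.1 p.2 &
      ~~ has (fun i => nedge p.2 (nth 0 p.1 i) (nth 0 p.1 (i.+1 %% 8))) I8].

Definition Lnat : seq (nat * nat) := [:: (0,1); (1,2); (2,3); (3,4); (0,4)].

Definition covers (T : seq (seq nat * seq nat)) x y :=
  has (fun p => nedge p.1 x y) T && has (fun p => nedge p.2 x y) T.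

Lemma T1good : all (goodpair 23) T1. Proof. by vm_compute. Qed.
Lemma T2good : all (goodpair 23) T2. Proof. by vm_compute. Qed.
Lemma T3good : all (goodpair 32) T3. Proof. by vm_compute. Qed.
Lemma T1cov : all (fun y => all (fun x => ((x,y) \in Lnat) || covers T1 x y) (iota 0 y)) (iota 0 23).
Proof. by vm_compute. Qed.
Lemma T2cov : all (fun y => all (fun x => covers T2 x y) (iota 0 y)) (iota 7 16).
Proof. by vm_compute. Qed.
Lemma T3cov : all (fun y => all (fun x => covers T3 x y) (iota 0 16)) (iota 16 16).
Proof. by vm_compute. Qed.
Lemma T1size : size T1 = 31. Proof. by []. Qed.
Lemma T2size : size T2 = 29. Proof. by []. Qed.
Lemma T3size : size T3 = 32. Proof. by []. Qed.

Definition mapP (f : nat -> nat) (p : seq nat * seq nat) := (map f p.1, map f p.2).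

Lemma nedge_map f s u v : size s = 8 -> nedge s u v -> nedge (map f s) (f u) (f v).
Proof.
move=> Hs /hasP [i Hi Hc]; apply/hasP; exists i => //.
have Hi8 : i < 8 by move: Hi; rewrite /I8 mem_iota.
have Hj8 : i.+1 %% 8 < 8 by rewrite ltn_pmod.
rewrite !(nth_map 0) ?Hs //.
by case/orP: Hc => /andP [/eqP -> /eqP ->]; rewrite !eqxx ?orbT.
Qed.

Lemma nedge_map_inv f m s a b : size s = 8 -> all (fun x => x < m) s -> a < m -> b < m ->
  {in [pred x | x < m] &, injective f} -> nedge (map f s) (f a) (f b) -> nedge s a b.
Proof.
move=> Hs Hall Ha Hb Hinj /hasP [i Hi Hc]; apply/hasP; exists i => //.
have Hi8 : i < 8 by move: Hi; rewrite /I8 mem_iota.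
have Hj8 : i.+1 %% 8 < 8 by rewrite ltn_pmod.
move: Hc; rewrite !(nth_map 0) ?Hs //.
have H1 : nth 0 s i < m by apply: (allP Hall); rewrite mem_nth ?Hs.
have H2 : nth 0 s (i.+1 %% 8) < m by apply: (allP Hall); rewrite mem_nth ?Hs.
case/orP => /andP [/eqP E1 /eqP E2].
  by rewrite (Hinj _ _ H1 Ha E1) (Hinj _ _ H2 Hb E2) !eqxx.
by rewrite (Hinj _ _ H1 Hb E1) (Hinj _ _ H2 Ha E2) !eqxx orbT.
Qed.

Definition goodpair2 (N : nat) (p1 p2 : seq nat) : bool :=
  [&& size p1 == 8, size p2 == 8, uniq p1, all (fun x => x < N) p1,
      perm_eq p1 p2 &
      ~~ has (fun i => nedge p2 (nth 0 p1 i) (nth 0 p1 (i.+1 %% 8))) I8].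

Lemma goodpairE N p : goodpair N p = goodpair2 N p.1 p.2.
Proof. by []. Qed.

Lemma goodpair_map f m N p : goodpair m p -> {in [pred x | x < m] &, injective f} ->
  (forall x, x < m -> f x < N) -> goodpair N (mapP f p).
Proof.
case: p => [p1 p2]; rewrite !goodpairE /mapP.
rewrite [(_, _).1]/= [(_, _).2]/= [(_, _).1]/= [(_, _).2]/=.
case/and5P => /eqP s1 /eqP s2 u1 a1 /andP [pe nd] Hinj Hf.
have a2 : all (fun x => x < m) p2 by rewrite -(perm_all _ pe).
apply/and5P; split.
- by rewrite size_map s1.
- by rewrite size_map s2.
- rewrite map_inj_in_uniq // => x y Hx Hy.
  by apply: Hinj; [exact: (allP a1) | exact: (allP a1)].
- by rewrite all_map; apply/allP => x Hx /=; apply: Hf; exact: (allP a1).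
apply/andP; split; first exact: perm_map.
apply/negP; case/hasP => i Hi Hc.
have Hi8 : i < 8 by move: Hi; rewrite /I8 mem_iota.
have Hj8 : i.+1 %% 8 < 8 by rewrite ltn_pmod.
move: Hc; rewrite !(nth_map 0) ?s1 // => Hc.
have H1 : nth 0 p1 i < m by apply: (allP a1); rewrite mem_nth ?s1.
have H2 : nth 0 p1 (i.+1 %% 8) < m by apply: (allP a1); rewrite mem_nth ?s1.
move/negP: nd; apply; apply/hasP; exists i => //.
exact: (nedge_map_inv s2 a2 H1 H2 Hinj Hc).
Qed.

Lemma goodpair_mono N M p : N <= M -> goodpair N p -> goodpair M p.
Proof.
case: p => p1 p2; rewrite !goodpairE [(_, _).1]/= [(_, _).2]/=.
rewrite /goodpair2; move=> NM /and5P [-> -> -> a1 ->]; rewrite andbT.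
by apply/allP => x Hx; apply: leq_trans NM; exact: (allP a1).
Qed.

Lemma covers_map f m T u v x y : all (goodpair m) T -> covers T u v -> f u = x -> f v = y ->
  covers (map (mapP f) T) x y.
Proof.
move=> HT /andP [/hasP [p Hp H1] /hasP [q Hq H2]] <- <-.
have := allP HT p Hp; case/and5P => /eqP sp1 _ _ _ _.
have := allP HT q Hq; case/and5P => _ /eqP sq2 _ _ _.
apply/andP; split; apply/hasP.
  by exists (mapP f p); [exact: map_f | exact: nedge_map].
by exists (mapP f q); [exact: map_f | exact: nedge_map].
Qed.

Lemma covers_cat1 T1 T2 x y : covers T1 x y -> covers (T1 ++ T2) x y.
Proof. by case/andP => A B; rewrite /covers !has_cat A B. Qed.
Lemma covers_cat2 T1 T2 x y : covers T2 x y -> covers (T1 ++ T2) x y.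
Proof. by case/andP => A B; rewrite /covers !has_cat A B !orbT. Qed.

Lemma covers_flatten (F : nat -> seq (seq nat * seq nat)) s i x y :
  i \in s -> covers (F i) x y -> covers (flatten (map F s)) x y.
Proof.
elim: s => //= a s IH; rewrite inE => /orP [/eqP -> | Hi] H.
  exact: covers_cat1.
exact/covers_cat2/IH.
Qed.

Lemma all_flatten_map (a : pred (seq nat * seq nat)) (F : nat -> seq (seq nat * seq nat)) s :
  (forall i, i \in s -> all a (F i)) -> all a (flatten (map F s)).
Proof.
elim: s => //= b s IH H; rewrite all_cat H ?mem_head //=.
by apply: IH => i Hi; apply: H; rewrite inE Hi orbT.
Qed.

Lemma size_flatten_map (F : nat -> seq (seq nat * seq nat)) s c :
  (forall i, size (F i) = c) -> size (flatten (map F s)) = c * size s.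
Proof. by move=> H; elim: s => [|b s IH] /=; [rewrite muln0 | rewrite size_cat IH H mulnS]. Qed.

Definition gm (j u : nat) := if u < 7 then u else u + 16 * j.
Definition hm (i j u : nat) := if u < 16 then 7 + 16 * i + u else 7 + 16 * j + (u - 16).

Fixpoint P (k : nat) : seq (seq nat * seq nat) :=
  if k is k'.+1 then
    P k' ++ (map (mapP (gm k)) T2 ++ flatten [seq map (mapP (hm i k)) T3 | i <- iota 0 k])
  else T1.

Lemma bin2_mul n : 'C(n, 2) * 2 = n * n.-1.
Proof.
elim: n => // n IH; rewrite binS bin1 mulnDl IH.
case: n {IH} => //= n; lia.
Qed.

Lemma P_size k : size (P k) * 8 + 5 = 'C(23 + 16 * k, 2).
Proof.
apply/eqP; rewrite -(eqn_pmul2r (isT : 0 < 2)) bin2_mul; apply/eqP.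
elim: k => [|k IH]; first by rewrite T1size.
have -> : P k.+1 = P k ++ (map (mapP (gm k.+1)) T2 ++ flatten [seq map (mapP (hm i k.+1)) T3 | i <- iota 0 k.+1]) by [].
rewrite !size_cat size_map T2size (@size_flatten_map _ _ 32); last first.
  by move=> i; rewrite size_map T3size.
rewrite size_iota.
have E : (23 + 16 * k.+1).-1 = 22 + 16 * k.+1 by rewrite addSn.
move: IH; rewrite E; have E2 : (23 + 16 * k).-1 = 22 + 16 * k by rewrite addSn.
rewrite E2 => IH; rewrite ?size_map ?T3size ?size_iota; nia.
Qed.

Lemma P_unfold k : P k.+1 = P k ++ (map (mapP (gm k.+1)) T2 ++
   flatten [seq map (mapP (hm i k.+1)) T3 | i <- iota 0 k.+1]).
Proof. by []. Qed.

Lemma P_good k : all (goodpair (23 + 16 * k)) (P k).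
Proof.
elim: k => [|k IH]; first exact: T1good.
have H1 : all (goodpair (23 + 16 * k.+1)) (P k).
  apply/allP => p Hp; apply: (@goodpair_mono (23 + 16 * k)); first lia.
  exact: (allP IH).
have H2 : all (goodpair (23 + 16 * k.+1)) (map (mapP (gm k.+1)) T2).
  rewrite all_map; apply/allP => p Hp.
  apply: (goodpair_map (m := 23)); first exact: (allP T2good).
    move=> u v; rewrite !inE => Hu Hv; rewrite /gm.
    by case: (ltnP u 7); case: (ltnP v 7); lia.
  by move=> u Hu; rewrite /gm; case: (ltnP u 7); lia.
have H3 : all (goodpair (23 + 16 * k.+1))
    (flatten [seq map (mapP (hm i k.+1)) T3 | i <- iota 0 k.+1]).
  apply: all_flatten_map => i; rewrite mem_iota add0n => Hi.
  rewrite all_map; apply/allP => p Hp.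
  apply: (goodpair_map (m := 32)); first exact: (allP T3good).
    move=> u v; rewrite !inE => Hu Hv; rewrite /hm.
    by case: (ltnP u 16); case: (ltnP v 16); lia.
  by move=> u Hu; rewrite /hm; case: (ltnP u 16); lia.
by rewrite P_unfold all_cat H1 all_cat H2.
Qed.

Lemma P_cov k x y : x < y -> y < 23 + 16 * k -> (x, y) \notin Lnat -> covers (P k) x y.
Proof.
elim: k => [|k IH] Hxy Hy HL.
  have := allP T1cov y; rewrite mem_iota add0n => /(_ Hy) /allP /(_ x).
  by rewrite mem_iota add0n => /(_ Hxy); rewrite (negbTE HL).
rewrite P_unfold; case: (ltnP y (23 + 16 * k)) => Hy2.
  exact/covers_cat1/IH.
apply: covers_cat2.
have HT2 : forall u v, u < v -> 7 <= v -> v < 23 -> covers T2 u v.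
  move=> u v H1 H2 H3; have Hv : v \in iota 7 16 by rewrite mem_iota; apply/andP; split.
  have := allP T2cov v Hv.
  by move/allP/(_ u); rewrite mem_iota add0n; apply.
case: (ltnP x 7) => Hx.
  apply: covers_cat1; apply: (covers_map (m := 23) (u := x) (v := y - 16 * k.+1)).
  - exact: T2good.
  - apply: HT2; lia.
  - by rewrite /gm Hx.
  - rewrite /gm; case: (ltnP (y - 16 * k.+1) 7); lia.
case: (ltnP x (23 + 16 * k)) => Hx2.
  apply: covers_cat2.
  apply: (covers_flatten (i := (x - 7) %/ 16)).
    by rewrite mem_iota add0n ltn_divLR //; lia.
  apply: (covers_map (m := 32) (u := (x - 7) %% 16) (v := 16 + (y - (23 + 16 * k)))).
  - exact: T3good.
  - have := allP T3cov (16 + (y - (23 + 16 * k))); rewrite mem_iota.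
    have -> : 16 <= 16 + (y - (23 + 16 * k)) < 16 + 16 by lia.
    move=> /(_ isT) /allP /(_ ((x - 7) %% 16)); rewrite mem_iota add0n ltn_mod; exact.
  - rewrite /hm ltn_mod /=; have := divn_eq (x - 7) 16; lia.
  - rewrite /hm; case: (ltnP (16 + (y - (23 + 16 * k))) 16); lia.
apply: covers_cat1; apply: (covers_map (m := 23) (u := x - 16 * k.+1) (v := y - 16 * k.+1)).
- exact: T2good.
- apply: HT2; lia.
- rewrite /gm; case: (ltnP (x - 16 * k.+1) 7); lia.
- rewrite /gm; case: (ltnP (y - 16 * k.+1) 7); lia.
Qed.

Lemma set2_eqE (T : finType) (a b c d : T) :
  [set a; b] = [set c; d] -> ((a == c) && (b == d)) || ((a == d) && (b == c)).
Proof.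
move=> E.
have Ha : (a == c) || (a == d) by rewrite -in_set2 -E set21.
have Hb : (b == c) || (b == d) by rewrite -in_set2 -E set22.
have Hc : (c == a) || (c == b) by rewrite -in_set2 E set21.
have Hd : (d == a) || (d == b) by rewrite -in_set2 E set22.
case/orP: Ha => /eqP Ha; case/orP: Hb => /eqP Hb; subst; rewrite ?eqxx ?orbT //=;
  move: Hc Hd; rewrite ?eqxx ?orbT ?orbb /= => Hc Hd.
- by rewrite eq_sym Hd.
- by rewrite eq_sym Hc.
Qed.

Definition mkc (N : nat) (s : seq nat) : cyc N.+1 :=
  [tuple (inord (nth 0 s i) : 'I_N.+1) | i < 8].

Lemma tnth_mkc N s i : tnth (mkc N s) i = inord (nth 0 s i).
Proof. by rewrite tnth_mktuple. Qed.

Definition goodc N s := [&& size s == 8, uniq s & all (fun x => x < N.+1) s].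

Lemma mkc_uniq N s : goodc N s -> is_cycle8 (mkc N s).
Proof.
case/and3P => /eqP Hs Hu Ha; apply/tuple_uniqP => i j; rewrite !tnth_mkc => E.
have Hi : nth 0 s i < N.+1 by apply: (allP Ha); rewrite mem_nth // Hs.
have Hj : nth 0 s j < N.+1 by apply: (allP Ha); rewrite mem_nth // Hs.
move: (congr1 (@nat_of_ord _) E); rewrite !inordK // => /eqP.
by rewrite nth_uniq ?Hs // => /eqP /val_inj.
Qed.

Lemma mem_mkc N s (x : 'I_N.+1) : goodc N s -> (x \in mkc N s) = (nat_of_ord x \in s).
Proof.
case/and3P => /eqP Hs Hu Ha; apply/tnthP/idP => [[i ->]|Hx].
  rewrite tnth_mkc inordK; first by rewrite mem_nth // Hs.
  by apply: (allP Ha); rewrite mem_nth // Hs.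
have Hi : index (nat_of_ord x) s < 8 by rewrite -Hs index_mem.
by exists (Ordinal Hi); rewrite tnth_mkc /= nth_index // inord_val.
Qed.

Lemma cedges_mkcP N s e : e \in cedges (mkc N s) ->
  exists i : 'I_8, e = [set (inord (nth 0 s i) : 'I_N.+1); inord (nth 0 s (i.+1 %% 8))].
Proof. by case/imsetP => i _ ->; exists i; rewrite !tnth_mkc. Qed.

Lemma nedge_cedges N s x y : size s = 8 -> nedge s x y ->
  [set (inord x : 'I_N.+1); inord y] \in cedges (mkc N s).
Proof.
move=> Hs /hasP [i Hi Hc].
have Hi8 : i < 8 by move: Hi; rewrite /I8 mem_iota.
apply/imsetP; exists (Ordinal Hi8) => //; rewrite !tnth_mkc /=.
by case/orP: Hc => /andP [/eqP -> /eqP ->] //; rewrite setUC.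
Qed.

Lemma inord_eqE N a b : a < N.+1 -> b < N.+1 -> ((inord a : 'I_N.+1) == inord b) = (a == b).
Proof. by move=> Ha Hb; rewrite -val_eqE /= !inordK. Qed.

Lemma goodpair_goodc N p : goodpair N.+1 p -> goodc N p.1 && goodc N p.2.
Proof.
case: p => p1 p2; rewrite goodpairE [(_, _).1]/= [(_, _).2]/=.
case/and5P => s1 s2 u1 a1 /andP [pe _].
by rewrite /goodc s1 s2 u1 a1 -(perm_uniq pe) -(perm_all _ pe) u1 a1.
Qed.

Lemma inside_mkc N p : goodpair N.+1 p -> inside (mkc N p.1) (mkc N p.2).
Proof.
move=> Hp; have /andP [g1 g2] := goodpair_goodc Hp.
move: Hp; case: p g1 g2 => p1 p2; rewrite goodpairE [(_, _).1]/= [(_, _).2]/= => g1 g2.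
case/and5P => /eqP s1 /eqP s2 u1 a1 /andP [pe nd].
split; first exact: mkc_uniq.
split.
  by apply/setP => x; rewrite !inE !mem_mkc // (perm_mem pe).
rewrite -setI_eq0; apply/eqP/setP => e; rewrite inE in_set0; apply/negP => /andP [H1 H2].
case/cedges_mkcP: H1 => i Ei; case/cedges_mkcP: H2 => j Ej.
have Hi8 : i < size p1 by rewrite s1.
have Hi8' : i.+1 %% 8 < size p1 by rewrite s1 ltn_pmod.
have Hj8 : j < size p2 by rewrite s2.
have Hj8' : j.+1 %% 8 < size p2 by rewrite s2 ltn_pmod.
have A1 : nth 0 p1 i < N.+1 by apply: (allP a1); rewrite mem_nth.
have A2 : nth 0 p1 (i.+1 %% 8) < N.+1 by apply: (allP a1); rewrite mem_nth.
have a2 : all (fun x => x < N.+1) p2 by rewrite -(perm_all _ pe).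
have B1 : nth 0 p2 j < N.+1 by apply: (allP a2); rewrite mem_nth.
have B2 : nth 0 p2 (j.+1 %% 8) < N.+1 by apply: (allP a2); rewrite mem_nth.
move/negP: nd; apply; apply/hasP; exists (val i); first by rewrite /I8 mem_iota /=.
apply/hasP; exists (val j); first by rewrite /I8 mem_iota /=.
have := set2_eqE (etrans (esym Ei) Ej); rewrite !inord_eqE //.
by case/orP => /andP [/eqP -> /eqP ->]; rewrite !eqxx ?orbT.
Qed.

Lemma mem_covered n (C : seq (cyc n)) e : (e \in covered C) = has (fun c => e \in cedges c) C.
Proof.
elim: C => [|c C IH]; first by rewrite /covered big_nil in_set0.
by rewrite /covered big_cons inE -/(covered C) IH.
Qed.

Lemma card_covered_le n (C : seq (cyc n)) : #|covered C| <= \sum_(c <- C) #|cedges c|.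
Proof.
elim: C => [|c C IH]; first by rewrite /covered !big_nil cards0.
rewrite /covered !big_cons -/(covered C).
have := cardsUI (cedges c) (covered C); lia.
Qed.

Lemma covered_eq_pairwise n (C : seq (cyc n)) :
  #|covered C| = \sum_(c <- C) #|cedges c| ->
  pairwise (fun c d => [disjoint cedges c & cedges d]) C.
Proof.
elim: C => [|c C IH] //; rewrite /covered !big_cons -/(covered C) => E.
have H1 := cardsUI (cedges c) (covered C).
have H2 := card_covered_le C.
have E2 : #|covered C| = \sum_(c <- C) #|cedges c| by lia.
have E3 : #|cedges c :&: covered C| = 0 by lia.
rewrite pairwise_cons IH // andbT; apply/allP => d Hd.
rewrite -setI_eq0; apply/eqP/setP => e; rewrite inE in_set0; apply/negP => /andP [H3 H4].
move/eqP: E3; rewrite cards_eq0 => /eqP/setP/(_ e); rewrite inE in_set0 H3 /= mem_covered.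
by move/negP; apply; apply/hasP; exists d.
Qed.

Lemma pairwise_covered_card n (C : seq (cyc n)) :
  pairwise (fun c d => [disjoint cedges c & cedges d]) C ->
  #|covered C| = \sum_(c <- C) #|cedges c|.
Proof.
elim: C => [|c C IH]; first by rewrite /covered !big_nil cards0.
rewrite pairwise_cons => /andP [Ha Hp]; rewrite /covered !big_cons -/(covered C).
have H1 := cardsUI (cedges c) (covered C).
have E3 : cedges c :&: covered C = set0.
  apply/setP => e; rewrite inE in_set0 mem_covered; apply/negP => /andP [H3 /hasP [d Hd H4]].
  have := allP Ha d Hd; rewrite -setI_eq0 => /eqP/setP/(_ e); rewrite inE in_set0 H3 H4 //.
move: H1; rewrite E3 cards0 IH //; lia.
Qed.

Lemma ordS_neq (i : 'I_8) : i != ordS i.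
Proof. case: i => [[|[|[|[|[|[|[|[|m]]]]]]]] Hi] //. Qed.

Lemma ordSS_neq (i j : 'I_8) : ~~ ((i == ordS j) && (ordS i == j)).
Proof. case: i => [[|[|[|[|[|[|[|[|m]]]]]]]] Hi] //; case: j => [[|[|[|[|[|[|[|[|m']]]]]]]] Hj] //. Qed.

Lemma card_cedges n (c : cyc n) : is_cycle8 c -> #|cedges c| = 8.
Proof.
move=> /tuple_uniqP Hinj; rewrite /cedges card_imset ?card_ord //.
move=> i j /set2_eqE /orP [/andP [/eqP E1 _] | /andP [/eqP E1 /eqP E2]].
  exact: Hinj.
by case/negP: (ordSS_neq i j); apply/andP; split; apply/eqP; apply: Hinj.
Qed.

Lemma cedges_sub n (c : cyc n) : is_cycle8 c -> cedges c \subset Kedges n.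
Proof.
move=> /tuple_uniqP Hinj; apply/subsetP => e /imsetP [i _ ->].
rewrite inE cards2; case: (tnth c i =P tnth c (ordS i)) => // /Hinj E.
by have := ordS_neq i; rewrite -E eqxx.
Qed.

Lemma card_Kedges n : #|Kedges n| = 'C(n, 2).
Proof. by rewrite /Kedges card_draws card_ord. Qed.

Lemma sum_cedges n (C : seq (cyc n)) : all (@is_cycle8 n) C ->
  \sum_(c <- C) #|cedges c| = 8 * size C.
Proof.
elim: C => [|c C IH]; first by rewrite big_nil.
by rewrite big_cons /= => /andP [Hc HC]; rewrite card_cedges // IH // mulnS.
Qed.

Lemma covered_sub n (C : seq (cyc n)) : all (@is_cycle8 n) C -> covered C \subset Kedges n.
Proof.
move=> HC; apply/subsetP => e; rewrite mem_covered => /hasP [c Hc He].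
exact: (subsetP (cedges_sub (allP HC c Hc))).
Qed.

Lemma leave_card n (C : seq (cyc n)) : is_packing C ->
  #|leave C| + 8 * size C = 'C(n, 2).
Proof.
case=> Hc Hp; rewrite /leave cardsD.
have := covered_sub Hc; rewrite -card_Kedges => /setIidPr ->.
rewrite pairwise_covered_card // sum_cedges //.
have := subset_leq_card (covered_sub Hc); rewrite pairwise_covered_card // sum_cedges //.
lia.
Qed.

Definition Ls (N : nat) : seq {set 'I_N.+1} :=
  map (fun p => [set (inord p.1 : 'I_N.+1); inord p.2]) Lnat.
Definition Lset N : {set {set 'I_N.+1}} := [set e in Ls N].

Lemma card_Lset N : #|Lset N| <= 5.
Proof. by rewrite /Lset cardsE; apply: leq_trans (card_size _) _; rewrite size_map. Qed.

Lemma cov_full N (Q : seq (seq nat)) :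
  all (goodc N) Q -> size Q * 8 + 5 = 'C(N.+1, 2) ->
  (forall x y, x < y -> y < N.+1 -> (x, y) \notin Lnat -> has (fun s => nedge s x y) Q) ->
  covered (map (mkc N) Q) = Kedges N.+1 :\: Lset N /\ is_packing (map (mkc N) Q).
Proof.
move=> Hg Hsz Hcov.
have Hc : all (@is_cycle8 N.+1) (map (mkc N) Q).
  by rewrite all_map; apply/allP => s Hs; apply: mkc_uniq; exact: (allP Hg).
have Hsub : Kedges N.+1 :\: Lset N \subset covered (map (mkc N) Q).
  apply/subsetP => e; rewrite in_setD => /andP [HL]; rewrite /Kedges in_set => /cards2P [a [b [Hab Ee]]].
  subst e.
  have key : forall a b : 'I_N.+1, a < b -> [set a; b] \notin Lset N ->
      [set a; b] \in covered (map (mkc N) Q).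
    move=> a' b' lt_ab; rewrite /Lset in_set => HL'.
    have HL2 : (nat_of_ord a', nat_of_ord b') \notin Lnat.
      apply: contra HL' => H; rewrite /Ls.
      have := map_f (fun p : nat * nat => [set (inord p.1 : 'I_N.+1); inord p.2]) H.
      by rewrite /= !inord_val.
    have /hasP [s Hs Hn] := Hcov _ _ lt_ab (ltn_ord b') HL2.
    rewrite mem_covered; apply/hasP; exists (mkc N s); first exact: map_f.
    have Hs8 : size s = 8 by case/and3P: (allP Hg s Hs) => /eqP.
    by have := nedge_cedges N Hs8 Hn; rewrite !inord_val.
  case: (ltngtP a b) => H.
  - exact: key.
  - by rewrite setUC; apply: key => //; rewrite setUC.
  - by move: Hab; rewrite (val_inj H) eqxx.
have Hle : #|covered (map (mkc N) Q)| <= 8 * size Q.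
  by have := card_covered_le (map (mkc N) Q); rewrite sum_cedges // size_map.
have Hge : 8 * size Q <= #|Kedges N.+1 :\: Lset N|.
  rewrite cardsD card_Kedges.
  have H1 : #|Kedges N.+1 :&: Lset N| <= 5.
    exact: leq_trans (subset_leq_card (subsetIr _ _)) (card_Lset N).
  by rewrite -Hsz mulnC -addnBA // leq_addr.
have Eq : covered (map (mkc N) Q) = Kedges N.+1 :\: Lset N.
  by apply/esym/eqP; rewrite eqEcard Hsub (leq_trans Hle Hge).
split => //; split => //.
apply: covered_eq_pairwise; apply/eqP; rewrite eqn_leq card_covered_le sum_cedges // size_map.
by rewrite Eq.
Qed.

Lemma bridge N (Pl : seq (seq nat * seq nat)) :
  all (goodpair N.+1) Pl -> size Pl * 8 + 5 = 'C(N.+1, 2) ->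
  (forall x y, x < y -> y < N.+1 -> (x, y) \notin Lnat -> covers Pl x y) ->
  exists C : seq (cyc N.+1), is_max_packing C /\ almost_2perfect C.
Proof.
move=> Hg Hsz Hcov.
have Hg1 : all (goodc N) (map fst Pl).
  by rewrite all_map; apply/allP => p Hp; case/andP: (goodpair_goodc (allP Hg p Hp)).
have Hg2 : all (goodc N) (map snd Pl).
  by rewrite all_map; apply/allP => p Hp; case/andP: (goodpair_goodc (allP Hg p Hp)).
have [E1 P1] : covered (map (mkc N) (map fst Pl)) = Kedges N.+1 :\: Lset N /\
               is_packing (map (mkc N) (map fst Pl)).
  apply: cov_full => //; first by rewrite size_map.
  move=> x y H1 H2 H3; case/andP: (Hcov x y H1 H2 H3) => /hasP [p Hp Hn] _.
  by apply/hasP; exists p.1 => //; exact: map_f.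
have [E2 P2] : covered (map (mkc N) (map snd Pl)) = Kedges N.+1 :\: Lset N /\
               is_packing (map (mkc N) (map snd Pl)).
  apply: cov_full => //; first by rewrite size_map.
  move=> x y H1 H2 H3; case/andP: (Hcov x y H1 H2 H3) => _ /hasP [p Hp Hn].
  by apply/hasP; exists p.2 => //; exact: map_f.
have HL : #|leave (map (mkc N) (map fst Pl))| <= 5.
  rewrite /leave E1; apply: leq_trans (card_Lset N).
  apply: subset_leq_card; apply/subsetP => e; rewrite !in_setD.
  by case: (e \in Lset N); case: (e \in Kedges N.+1).
exists (map (mkc N) (map fst Pl)); split.
  split => // D HD.
  have := leave_card HD; lia.
exists (map (fun p => (mkc N p.1, mkc N p.2)) Pl); split.
  by rewrite -!map_comp.
split.
  move=> p /seq.mapP [q Hq ->]; exact: (inside_mkc (allP Hg q Hq)).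
have -> : map snd (map (fun p => (mkc N p.1, mkc N p.2)) Pl) = map (mkc N) (map snd Pl).
  by rewrite -!map_comp.
split => //.
by rewrite /leave E1 E2.
Qed.

Theorem lemma3p4 (n : nat) :
  n %% 16 = 7 -> 23 <= n ->
  exists C : seq (cyc n), is_max_packing C /\ almost_2perfect C.
Proof.
move=> Hmod Hn.
have [k Hk] : exists k, n = (22 + 16 * k).+1.
  exists (n %/ 16 - 1); have := divn_eq n 16; lia.
subst n; apply: (@bridge _ (P k)).
- by have := P_good k; rewrite addSn.
- by have := P_size k; rewrite addSn.
- move=> x y H1 H2 H3; apply: P_cov => //; by rewrite addSn.
Qed.
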